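(* Let $N,w,h$ be positive integers with $w\geq 2$ and $N/h\leq w\leq N-h+1$. Let $$f_N(w,h)=\max\Big\{\sum_{l=1}^{|\Lambda|}N_l^2\ :\ \Lambda \text{ a partition of }\{1,\dots,N\}\text{ with }\max\Lambda\leq w,\ |\Lambda|\geq h\Big\}.$$ Then $f_N(w,h)=kw^2+u^2+v$, where $k=\left\lfloor\frac{N-h}{w-1}\right\rfloor$, $u=N-h+1-(w-1)k$, and $v=h-k-1$.
   Context: A partition $\Lambda=\{A_1,\dots,A_{|\Lambda|}\}$ of $\{1,\dots,N\}$ is a collection of nonempty pairwise disjoint subsets whose union is $\{1,\dots,N\}$; $|\Lambda|$ is the number of subsets, $N_l=|A_l|$, and $\max\Lambda=\max_lN_l$. *)

(* Defs.v *)
From mathcomp Require Import all_boot all_order all_algebra.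
Set Implicit Arguments. Unset Strict Implicit. Unset Printing Implicit Defensive.

(* The ground set {1,...,N} is represented by 'I_N = {0,...,N-1}.
   A partition Lambda is a set of nonempty pairwise disjoint blocks covering
   the ground set: mathcomp's [partition P [set: 'I_N]]. *)

Definition admissible (N w h : nat) (P : {set {set 'I_N}}) : bool :=
  [&& partition P [set: 'I_N], [forall A in P, #|A| <= w] & h <= #|P|].

Definition sqsum (N : nat) (P : {set {set 'I_N}}) : nat :=
  \sum_(A in P) #|A| ^ 2.

Definition fN (N w h : nat) : nat :=
  \max_(P : {set {set 'I_N}} | admissible w h P) sqsum P.

(* Main.v *)
Require Import Defs.
From mathcomp Require Import all_boot all_order all_algebra zify.

Definition g (c x : nat) : nat := (x %/ c) * c ^ 2 + (x %% c) ^ 2.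

Lemma gstep c x b : 0 < c -> b <= c -> g c x + b ^ 2 <= g c (x + b).
Proof.
move=> c0 bc; rewrite /g.
have hx := divn_eq x c; have hr := ltn_pmod x c0.
set q := x %/ c in hx *; set r := x %% c in hx hr *.
case: (ltnP (r + b) c) => H.
  have -> : x + b = q * c + (r + b) by lia.
  rewrite divnMDl // divn_small // modnMDl modn_small //. nia.
have -> : x + b = (q + 1) * c + (r + b - c) by lia.
have H2 : r + b - c < c by lia.
rewrite divnMDl // divn_small // modnMDl modn_small //.
have : 0 <= (c - r) * (c - b) by [].
nia.
Qed.

Lemma gmono c x y : 0 < c -> x <= y -> g c x <= g c y.
Proof.
move=> c0; apply: (homo_leq (f := g c) (r := leq)) => //.
  by move=> a b d; apply: leq_trans.
move=> i; have := gstep c i 1 c0 c0; rewrite addn1; lia.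
Qed.

Lemma sumsq_le (I : finType) (P : pred I) (b : I -> nat) c :
  0 < c -> (forall i, P i -> b i <= c) ->
  \sum_(i | P i) b i ^ 2 <= g c (\sum_(i | P i) b i).
Proof.
move=> c0 hb.
apply: (big_rec2 (fun y1 y2 => y1 <= g c y2)); first by rewrite /g div0n mod0n.
move=> i y1 y2 Pi IH.
have := gstep c y2 (b i) c0 (hb i Pi); rewrite (addnC (b i)); lia.
Qed.
Lemma ub N w h (P : {set {set 'I_N}}) : 2 <= w -> admissible w h P ->
  sqsum P <= g (w - 1) (N - h) + 2 * (N - h) + h.
Proof.
move=> w2 /and3P [hp /forall_inP hw hh].
have c0 : 0 < w - 1 by lia.
have hN : \sum_(A in P) #|A| = N by rewrite -(card_partition hp) cardsT card_ord.
have h1 : forall A, A \in P -> 0 < #|A|.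
  move=> A HA; rewrite card_gt0; apply/eqP => E.
  by move: hp => /and3P [_ _]; rewrite -E HA.
have e1 : sqsum P = \sum_(A in P) (#|A|.-1) ^ 2 + 2 * \sum_(A in P) #|A|.-1 + #|P|.
  rewrite /sqsum -sum1_card big_distrr -!big_split /=; apply: eq_bigr => A HA.
  have := h1 A HA; case: #|A| => // n _ /=; rewrite !expnS !expn0 !muln1; nia.
have e2 : \sum_(A in P) #|A|.-1 + #|P| = N.
  rewrite -sum1_card -big_split /=; apply: etrans hN; apply: eq_bigr => A HA.
  by rewrite addn1 prednK // h1.
have hb : \sum_(A in P) #|A|.-1 ^ 2 <= g (w - 1) (\sum_(A in P) #|A|.-1).
  apply: sumsq_le => // A HA; have := hw A HA; lia.
have hm := gmono (w - 1) (\sum_(A in P) #|A|.-1) (N - h) c0 (_ : _ <= N - h).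
rewrite e1; have := hm ltac:(lia). move: hb e2 hh; set T := \sum_(A in P) _.-1; set S := \sum_(A in P) _ ^ 2. set m := #|P|. set G1 := g _ T. set G2 := g _ (N - h). move=> *. lia.
Qed.

Definition lo (w k u t : nat) := if t <= k then t * w else k * w + u + (t - k - 1).

Lemma lo_lt w k u t : 0 < w -> 0 < u -> lo w k u t < lo w k u t.+1.
Proof.
move=> w0 u0; rewrite /lo.
case: (ltngtP t k) => H; nia.
Qed.

Lemma lo_ltn w k u s t : 0 < w -> 0 < u -> s < t -> lo w k u s < lo w k u t.
Proof.
move=> w0 u0 st.
apply: (homo_ltn (f := lo w k u) (r := fun a b => a < b) _ _ st).
  by move=> ???; apply: ltn_trans.
by move=> i; apply: lo_lt.
Qed.

Lemma lo_leq w k u s t : 0 < w -> 0 < u -> s <= t -> lo w k u s <= lo w k u t.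
Proof.
move=> w0 u0; rewrite leq_eqVlt => /orP [/eqP -> //|H].
exact: ltnW (lo_ltn w k u s t w0 u0 H).
Qed.

Lemma lo_uniq w k u s t i : 0 < w -> 0 < u ->
  lo w k u s <= i < lo w k u s.+1 -> lo w k u t <= i < lo w k u t.+1 -> s = t.
Proof.
move=> w0 u0 /andP [a1 a2] /andP [b1 b2].
case: (ltngtP s t) => // H.
- have := lo_leq w k u _ _ w0 u0 H; lia.
- have := lo_leq w k u _ _ w0 u0 H; lia.
Qed.

Lemma exists_t (f : nat -> nat) n i : f 0 <= i < f n ->
  exists t, t < n /\ f t <= i < f t.+1.
Proof.
elim: n => [|n IH]; first lia.
case: (ltnP i (f n)) => H1 /andP [H2 H3].
- have [t [Ht1 Ht2]] : exists t, t < n /\ f t <= i < f t.+1 by apply: IH; lia.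
  exists t; split => //; lia.
- exists n; split => //; lia.
Qed.

Lemma sum_int a b n : \sum_(0 <= i < n) (if a <= i < b then 1 else 0) = minn n b - a.
Proof.
elim: n => [|n IH]; first by rewrite big_geq // min0n.
rewrite big_nat_recr //= IH; case: ifP => H; lia.
Qed.

Lemma card_int N a b : b <= N -> #|[set i : 'I_N | a <= i < b]| = b - a.
Proof.
move=> bN; rewrite -sum1_card.
rewrite (eq_bigl (fun i : 'I_N => a <= i < b)); last by move=> i; rewrite inE.
rewrite big_mkcond /= -(big_mkord xpredT (fun i => if a <= i < b then 1 else 0)).
rewrite sum_int; lia.
Qed.

Lemma lb N w h : 0 < N -> 0 < h -> 2 <= w -> N <= w * h -> w + h <= N + 1 ->
  exists P : {set {set 'I_N}},
    admissible w h P /\ sqsum P = g (w - 1) (N - h) + 2 * (N - h) + h.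
Proof.
move=> N0 h0 w2 Nwh whN.
set c := w - 1.
have c0 : 0 < c by rewrite /c; lia.
have hx := divn_eq (N - h) c; have hr := ltn_pmod (N - h) c0.
set k := (N - h) %/ c in hx *; set r := (N - h) %% c in hx hr *.
have ew : w = c + 1 by rewrite /c; lia.
have kh : k <= h.
  have : k * c <= h * c by nia.
  by rewrite leq_pmul2r.
have rk : k = h -> r = 0 by move=> E; nia.
set u := r + 1.
have w0 : 0 < w by lia.
have u0 : 0 < u by rewrite /u addn1.
have loh : lo w k u h = N.
  rewrite /lo; case: ifP => H.
    have E : k = h by lia.
    have := rk E; nia.
  rewrite /u; nia.
pose L := lo w k u.
pose B (t : nat) := [set i : 'I_N | L t <= i < L t.+1].
pose P := [set B (nat_of_ord t) | t : 'I_h].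
have LN : forall t : 'I_h, L t.+1 <= N.
  by move=> t; rewrite -loh; apply: lo_leq.
have cardB : forall t : 'I_h, #|B t| = L t.+1 - L t.
  by move=> t; rewrite card_int.
have memB : forall t : 'I_h, exists2 i : 'I_N, i \in B t & L t = i.
  move=> t; have Ht : L t < N by apply: leq_trans (LN t); apply: lo_lt.
  exists (Ordinal Ht) => //; rewrite inE /=; apply/andP; split => //.
  exact: lo_lt.
have Binj : injective (fun t : 'I_h => B t).
  move=> s t /= E; apply: val_inj => /=.
  have [i Hi _] := memB s; move: (Hi); rewrite E inE => Ht; move: Hi; rewrite inE => Hs.
  exact: (lo_uniq _ _ _ _ _ _ w0 u0 Hs Ht).
have dB : forall t, L t.+1 - L t = if t < k then w else if t == k then u else 1.
  move=> t; rewrite /L /lo; case: (ltngtP t k) => H; nia.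
exists P; split.
  apply/and3P; split.
  - apply/and3P; split.
    + apply/eqP/setP => i; rewrite inE; apply/bigcupP.
      have [t [Ht1 Ht2]] : exists t, t < h /\ L t <= i < L t.+1.
        apply: exists_t; apply/andP; split; last by rewrite /L loh. by rewrite /L /lo leq0n mul0n.
      exists (B (Ordinal Ht1)); first by apply/imsetP; exists (Ordinal Ht1).
      by rewrite inE.
    + apply/trivIsetP => A1 A2 /imsetP [s _ ->] /imsetP [t _ ->] neq.
      rewrite -setI_eq0; apply/eqP/setP => i; rewrite !inE.
      apply/negbTE/negP => /andP [Hs Ht].
      move: neq; rewrite (lo_uniq _ _ _ _ _ _ w0 u0 Hs Ht); by rewrite eqxx.
    + apply/imsetP => [[t _ E]].
      have [i Hi _] := memB t; by rewrite -E inE in Hi.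
  - apply/forall_inP => A /imsetP [t _ ->]; rewrite cardB dB.
    case: ifP => // _; case: ifP => _; rewrite /u; lia.
  - by rewrite card_imset // card_ord.
rewrite /sqsum big_imset /=; last by move=> s t _ _; apply: Binj.
rewrite (eq_bigr (fun t : 'I_h => (if t < k then w else if nat_of_ord t == k then u else 1) ^ 2)); last first.
  by move=> t _; rewrite cardB dB.
rewrite (eq_bigl xpredT); last by move=> t; rewrite inE.
rewrite -(big_mkord xpredT (fun t => (if t < k then w else if t == k then u else 1) ^ 2)).
rewrite (big_cat_nat _ (n := k)) //=.
rewrite (eq_big_nat _ _ (F2 := fun _ => w ^ 2)); last by move=> i /andP [_ ->].
rewrite sum_nat_const_nat subn0.
rewrite /g -/c -/k -/r.
case: (ltnP k h) => H.
  rewrite big_ltn // ltnn eqxx.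
  rewrite (eq_big_nat _ _ (F2 := fun _ => 1)); last first.
    by move=> i /andP [H1 _]; rewrite ltnNge (ltnW H1) /= gtn_eqF.
  rewrite sum_nat_const_nat /u; nia.
have E : k = h by lia.
rewrite E big_geq //; have := rk E; nia.
Qed.

Local Open Scope ring_scope.

Theorem lemma1 (N w h : nat) :
  (0 < N)%N -> (0 < h)%N -> (2 <= w)%N ->
  (N <= w * h)%N -> (w + h <= N + 1)%N ->
  let k : nat := ((N - h) %/ (w - 1))%N in
  let u : int := N%:Z - h%:Z + 1 - (w%:Z - 1) * k%:Z in
  let v : int := h%:Z - k%:Z - 1 in
  (fN N w h)%:Z = k%:Z * w%:Z ^+ 2 + u ^+ 2 + v.
Proof.
move=> N0 h0 w2 Nwh whN k u v.
have Hf : fN N w h = (g (w - 1) (N - h) + 2 * (N - h) + h)%N.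
  apply/eqP; rewrite eqn_leq; apply/andP; split.
  - apply/bigmax_leqP => P HP; exact: ub w2 HP.
  - have [P [HP HS]] := lb N w h N0 h0 w2 Nwh whN; rewrite -HS; exact: leq_bigmax_cond.
rewrite Hf /g /u /v -/k.
have c0 : (0 < w - 1)%N by lia.
have hx := divn_eq (N - h) (w - 1).
have hr := ltn_pmod (N - h) c0.
rewrite -/k in hx *.
set r := ((N - h) %% (w - 1))%N in hx hr *.
clearbody k r u v.
set c := (w - 1)%N in hx hr c0 *.
have ew : w = (c + 1)%N by rewrite /c; lia.
clearbody c.
have eN : N = (k * c + r + h)%N by lia.
subst N w.
lia.
Qed.
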